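(* Let $X$ be a well-filtered space such that its Smyth power space $P_S(X)$ is first-countable. Then the upper Vietoris topology and the Scott topology on $\mathsf{K}(X)$ coincide.
   Context: All spaces are $T_0$; the specialization order is $x\le y$ iff $x\in\overline{\{y\}}$, and saturated sets are the upper sets in this order. $\mathsf{K}(X)$ is the set of nonempty compact saturated subsets of $X$ ordered by reverse inclusion; a family in $\mathsf{K}(X)$ has a supremum iff its intersection lies in $\mathsf{K}(X)$, and then the supremum is the intersection. The Scott topology on a poset $Q$ consists of upper sets $U$ such that every directed $D$ whose supremum exists and lies in $U$ meets $U$. For open $U\subseteq X$, $\Box U=\{K\in\mathsf{K}(X):K\subseteq U\}$; the upper Vietoris topology on $\mathsf{K}(X)$ has base $\{\Box U: U\text{ open}\}$, and the resulting space is the Smyth power space $P_S(X)$. $X$ is well-filtered if for every open $U$ and every family $\mathcal K\subseteq\mathsf{K}(X)$ filtered under inclusion, $\bigcap\mathcal K\subseteq U$ implies $K\subseteq U$ for some $K\in\mathcal K$. *)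

(* Defs.v *)
From Stdlib Require Import List.
Set Implicit Arguments.

Record Space := {
  carrier :> Type;
  isOpen : (carrier -> Prop) -> Prop;
  open_ext : forall U V : carrier -> Prop,
      (forall x, U x <-> V x) -> isOpen U -> isOpen V;
  open_full : isOpen (fun _ => True);
  open_inter : forall U V, isOpen U -> isOpen V -> isOpen (fun x => U x /\ V x);
  open_union : forall F : (carrier -> Prop) -> Prop,
      (forall U, F U -> isOpen U) -> isOpen (fun x => exists U, F U /\ U x)
}.

Definition subset {T : Type} (A B : T -> Prop) : Prop := forall x, A x -> B x.

Section Defs.
Variable X : Space.

Definition T0 : Prop :=
  forall x y : X, (forall U, isOpen X U -> (U x <-> U y)) -> x = y.

Definition spec_le (x y : X) : Prop := forall U, isOpen X U -> U x -> U y.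

Definition saturated (A : X -> Prop) : Prop :=
  forall x y, A x -> spec_le x y -> A y.

Definition compact (A : X -> Prop) : Prop :=
  forall F : (X -> Prop) -> Prop,
    (forall U, F U -> isOpen X U) ->
    (forall x, A x -> exists U, F U /\ U x) ->
    exists l : list (X -> Prop),
      (forall U, In U l -> F U) /\ (forall x, A x -> exists U, In U l /\ U x).

Definition inK (K : X -> Prop) : Prop :=
  (exists x, K x) /\ compact K /\ saturated K.

Definition well_filtered : Prop :=
  forall (U : X -> Prop) (KK : (X -> Prop) -> Prop),
    isOpen X U ->
    (forall K, KK K -> inK K) ->
    (exists K, KK K) ->
    (forall K1 K2, KK K1 -> KK K2 ->
        exists K3, KK K3 /\ subset K3 K1 /\ subset K3 K2) ->
    subset (fun x => forall K, KK K -> K x) U ->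
    exists K, KK K /\ subset K U.

Definition KX : Type := { K : X -> Prop | inK K }.

Definition Kle (a b : KX) : Prop := subset (proj1_sig b) (proj1_sig a).

Definition directed (D : KX -> Prop) : Prop :=
  (exists d, D d) /\
  (forall a b, D a -> D b -> exists c, D c /\ Kle a c /\ Kle b c).

Definition is_sup (D : KX -> Prop) (s : KX) : Prop :=
  (forall d, D d -> Kle d s) /\
  (forall u, (forall d, D d -> Kle d u) -> Kle s u).

Definition scott_open (W : KX -> Prop) : Prop :=
  (forall a b, W a -> Kle a b -> W b) /\
  (forall D s, directed D -> is_sup D s -> W s -> exists d, D d /\ W d).

Definition Box (U : X -> Prop) : KX -> Prop := fun K => subset (proj1_sig K) U.

Definition uv_open (W : KX -> Prop) : Prop :=
  forall K, W K -> exists U, isOpen X U /\ Box U K /\ subset (Box U) W.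

Definition PS_first_countable : Prop :=
  forall K : KX, exists B : nat -> (KX -> Prop),
    (forall n, exists V, uv_open V /\ V K /\ subset V (B n)) /\
    (forall W, uv_open W -> W K -> exists n, subset (B n) W).

End Defs.

(* Main.v *)
Require Import Defs.
From Stdlib Require Import List Classical ClassicalEpsilon Lia Arith.

Lemma open_empty (X : Space) : isOpen X (fun _ => False).
Proof.
  eapply open_ext; [| apply (open_union X (fun _ => False)); intros; contradiction].
  intros x; split; [intros [U [H _]]; exact H | intros []].
Qed.

Lemma open_list (X : Space) (l : list (X -> Prop)) :
  (forall U, In U l -> isOpen X U) -> isOpen X (fun x => exists U, In U l /\ U x).
Proof. exact (open_union X (fun U => In U l)). Qed.

Lemma Box_open (X : Space) (U : X -> Prop) : isOpen X U -> uv_open (Box U).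
Proof. intros HU K HK; exists U; split; [auto| split; [auto | intros K' H; exact H]]. Qed.

Lemma sep (X : Space) (K : KX X) x : ~ proj1_sig K x ->
  exists U, isOpen X U /\ subset (proj1_sig K) U /\ ~ U x.
Proof.
  destruct K as [K [Hne [Hc Hs]]]; simpl; intros Hx.
  destruct (Hc (fun V => isOpen X V /\ ~ V x)) as [l [Hl Hcov]].
  - intros U [H _]; exact H.
  - intros k Hk. apply NNPP; intro Hn. apply Hx. apply (Hs k x Hk).
    intros U HU HUk. apply NNPP; intro HUx. apply Hn. exists U; split; [split|]; auto.
  - exists (fun y => exists U, In U l /\ U y). split; [apply open_list; intros U HU; apply (Hl U HU)| split].
    + intros y Hy; exact (Hcov y Hy).
    + intros [U [HU HUx]]. apply (Hl U HU). exact HUx.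
Qed.

Lemma uv_scott (X : Space) : well_filtered X -> forall W, @uv_open X W -> scott_open W.
Proof.
  intros Hwf W HW; split.
  - intros a b Ha Hab. destruct (HW a Ha) as [U [HU [HaU HUW]]]. apply HUW.
    unfold Box, Kle in *. intros x Hx. apply HaU, Hab, Hx.
  - intros D s [[d0 Hd0] Hdir] [Hub Hlub] Hs.
    destruct (HW s Hs) as [U [HU [HsU HUW]]].
    pose (KK := fun K : X -> Prop => exists d, D d /\ proj1_sig d = K).
    assert (HKK : forall K, KK K -> inK X K) by (intros K [d [_ <-]]; exact (proj2_sig d)).
    assert (Hne : exists K, KK K) by (exists (proj1_sig d0); exists d0; auto).
    assert (Hfil : forall K1 K2, KK K1 -> KK K2 -> exists K3, KK K3 /\ subset K3 K1 /\ subset K3 K2).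
    { intros K1 K2 [a [Ha <-]] [b [Hb <-]]. destruct (Hdir a b Ha Hb) as [c [Hc [Hac Hbc]]].
      exists (proj1_sig c); split; [exists c; auto | split; assumption]. }
    pose (I := fun x => forall K, KK K -> K x).
    assert (HI : inK X I).
    { split; [|split].
      - apply NNPP; intro Hn.
        destruct (Hwf (fun _ => False) KK (open_empty X) HKK Hne Hfil) as [K [HK HKe]].
        + intros x Hx. apply Hn. exists x; exact Hx.
        + destruct (HKK K HK) as [[x Hx] _]. exact (HKe x Hx).
      - intros F HF Hcov.
        destruct (Hwf (fun x => exists U, F U /\ U x) KK (open_union X F HF) HKK Hne Hfil Hcov)
          as [K [HK HKU]].
        destruct (HKK K HK) as [_ [Hc _]]. destruct (Hc F HF HKU) as [l [Hl Hlc]].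
        exists l; split; auto. intros x Hx; apply Hlc, Hx, HK.
      - intros x y Hx Hxy K HK. destruct (HKK K HK) as [_ [_ Hsat]]. exact (Hsat x y (Hx K HK) Hxy). }
    pose (i := exist _ I HI : KX X).
    assert (His : subset I (proj1_sig s)).
    { apply (Hlub i). intros d Hd. unfold Kle; simpl. intros x Hx. apply Hx. exists d; auto. }
    assert (HIU : subset I U) by (intros x Hx; apply HsU, His, Hx).
    destruct (Hwf U KK HU HKK Hne Hfil HIU) as [K [[d [Hd <-]] HdU]].
    exists d; split; [exact Hd| apply HUW; exact HdU].
Qed.

Fixpoint Qf (X : Space) (U : nat -> X -> Prop) (n : nat) : X -> Prop :=
  match n with 0 => U 0 | S m => fun x => Qf X U m x /\ U (S m) x end.
Arguments Qf [X] U n _.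

Lemma Qf_open (X : Space) (U : nat -> X -> Prop) : (forall n, isOpen X (U n)) -> forall n, isOpen X (Qf U n).
Proof. intros H n; induction n; simpl; [apply H| apply open_inter; auto]. Qed.

Lemma Qf_sub (X : Space) (U : nat -> X -> Prop) m j : m <= j -> subset (Qf U j) (U m).
Proof.
  induction j; intros Hj x Hx.
  - assert (m = 0) by lia; subst; exact Hx.
  - destruct (Nat.eq_dec m (S j)) as [->|Hne]; [exact (proj2 Hx)|].
    apply IHj; [lia| exact (proj1 Hx)].
Qed.

Lemma Qf_K (X : Space) (U : nat -> X -> Prop) (K : X -> Prop) :
  (forall n, subset K (U n)) -> forall n, subset K (Qf U n).
Proof. intros H n; induction n; simpl; intros x Hx; [apply H; auto| split; [apply IHn|apply H]; auto]. Qed.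

Lemma cover_fin (X : Space) (F : (X -> Prop) -> Prop) (P : nat -> Prop) (L : nat -> X -> Prop) :
  (forall j, P j -> forall x, L j x -> exists U, F U /\ U x) ->
  (forall j, P j -> compact X (L j)) -> (forall U, F U -> isOpen X U) ->
  forall N, exists l, (forall U, In U l -> F U) /\
    forall j x, j < N -> P j -> L j x -> exists U, In U l /\ U x.
Proof.
  intros Hcov Hc HF N; induction N.
  - exists nil; split; [intros U []| intros; lia].
  - destruct IHN as [l [Hl Hlc]].
    destruct (classic (P N)) as [HP|HP].
    + destruct (Hc N HP F HF (Hcov N HP)) as [l' [Hl' Hl'c]].
      exists (l' ++ l); split.
      * intros U HU; apply in_app_or in HU; destruct HU; auto.
      * intros j x Hj Pj Lx. destruct (Nat.eq_dec j N) as [->|Hne].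
        -- destruct (Hl'c x Lx) as [U [HU Ux]]; exists U; split; auto; apply in_or_app; auto.
        -- destruct (Hlc j x ltac:(lia) Pj Lx) as [U [HU Ux]]; exists U; split; auto; apply in_or_app; auto.
    + exists l; split; auto. intros j x Hj Pj Lx. destruct (Nat.eq_dec j N) as [->|Hne]; [contradiction|].
      apply (Hlc j x); auto; lia.
Qed.

Lemma scott_uv (X : Space) : PS_first_countable X -> forall W, @scott_open X W -> uv_open W.
Proof.
  intros Hfc W [Hup Hsc] K HK.
  destruct (Hfc K) as [B [HB1 HB2]].
  assert (HU : forall n, {U | isOpen X U /\ Box U K /\ subset (Box U) (B n)}).
  { intro n. apply constructive_indefinite_description. destruct (HB1 n) as [V [HV [HVK HVB]]].
    destruct (HV K HVK) as [U [HU [HUK HUV]]]. exists U. split; auto. split; auto.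
    intros L HL; apply HVB, HUV, HL. }
  pose (U := fun n => proj1_sig (HU n)).
  assert (HUo : forall n, isOpen X (U n)) by (intro n; exact (proj1 (proj2_sig (HU n)))).
  assert (HUK : forall n, subset (proj1_sig K) (U n)) by (intro n; exact (proj1 (proj2 (proj2_sig (HU n))))).
  assert (HUB : forall n, subset (Box (U n)) (B n)) by (intro n; exact (proj2 (proj2 (proj2_sig (HU n))))).
  apply NNPP; intro Hn.
  assert (HKn : forall n, {L : KX X | Box (Qf U n) L /\ ~ W L}).
  { intro n; apply constructive_indefinite_description. apply NNPP; intro H. apply Hn.
    exists (Qf U n). split; [apply Qf_open; auto|split; [apply Qf_K; auto| ]].
    intros L HL. apply NNPP; intro HWL. apply H; exists L; auto. }
  pose (Kn := fun n => proj1_sig (HKn n)).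
  assert (key : forall V, isOpen X V -> subset (proj1_sig K) V ->
            exists m0, forall j, m0 <= j -> subset (proj1_sig (Kn j)) V).
  { intros V HV HKV. destruct (HB2 (Box V) (Box_open X V HV) HKV) as [m0 Hm0]. exists m0.
    intros j Hj. apply Hm0, HUB. intros x Hx. apply (Qf_sub X U _ _ Hj).
    apply (proj1 (proj2_sig (HKn j))), Hx. }
  pose (Hset := fun n x => proj1_sig K x \/ exists m, n <= m /\ proj1_sig (Kn m) x).
  assert (Hinst : forall n, inK X (Hset n)).
  { intro n. destruct (proj2_sig K) as [[x0 Hx0] [HKc HKs]]. split; [|split].
    - exists x0; left; exact Hx0.
    - intros F HF Hcov.
      destruct (HKc F HF (fun x Hx => Hcov x (or_introl Hx))) as [l [Hl Hlc]].
      destruct (key (fun x => exists V, In V l /\ V x)) as [m0 Hm0].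
      + apply open_list; intros V HV; apply HF, Hl, HV.
      + exact Hlc.
      + destruct (cover_fin X F (fun j => n <= j) (fun j => proj1_sig (Kn j))) with (N := m0)
          as [l' [Hl' Hl'c]].
        * intros j Hj x Hx. apply Hcov. right. exists j; auto.
        * intros j _. exact (proj1 (proj2 (proj2_sig (Kn j)))).
        * exact HF.
        * exists (l ++ l'); split.
          -- intros V HV; apply in_app_or in HV; destruct HV; auto.
          -- intros x [Hx|[m [Hm Hx]]].
             ++ destruct (Hlc x Hx) as [V [HV Vx]]; exists V; split; auto; apply in_or_app; auto.
             ++ destruct (Nat.lt_ge_cases m m0) as [Hlt|Hge].
                ** destruct (Hl'c m x Hlt Hm Hx) as [V [HV Vx]]; exists V; split; auto; apply in_or_app; auto.
                ** destruct (Hm0 m Hge x Hx) as [V [HV Vx]]; exists V; split; auto; apply in_or_app; auto.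
    - intros x y [Hx|[m [Hm Hx]]] Hxy.
      + left; exact (HKs x y Hx Hxy).
      + right; exists m; split; auto. exact (proj2 (proj2 (proj2_sig (Kn m))) x y Hx Hxy). }
  pose (Hn' := fun n => exist _ (Hset n) (Hinst n) : KX X).
  pose (D := fun d => exists n, d = Hn' n).
  assert (Hmono : forall p q, p <= q -> subset (Hset q) (Hset p)).
  { intros p q Hpq x [Hx|[m [Hm Hx]]]; [left; auto| right; exists m; split; [lia|auto]]. }
  destruct (Hsc D K) as [d [[n ->] Hd]].
  - split; [exists (Hn' 0); exists 0; auto|].
    intros a b [p ->] [q ->]. exists (Hn' (p + q)); split; [exists (p+q); auto|].
    split; unfold Kle; simpl; apply Hmono; lia.
  - split.
    + intros d [m ->]. unfold Kle; simpl. intros x Hx; left; exact Hx.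
    + intros u Hu. unfold Kle. intros x Hx. apply NNPP; intro HnK.
      destruct (sep X K x HnK) as [V [HV [HKV HVx]]].
      destruct (key V HV HKV) as [m0 Hm0].
      assert (Hs : Hset m0 x) by (apply (Hu (Hn' m0)); [exists m0; auto| exact Hx]).
      destruct Hs as [Hs|[m [Hm Hs]]]; [contradiction|].
      apply HVx, (Hm0 m Hm), Hs.
  - exact HK.
  - apply (proj2 (proj2_sig (HKn n))). apply (Hup (Hn' n)); auto.
    unfold Kle; simpl. intros x Hx. right. exists n; split; auto.
Qed.

Theorem mainTheorem2 (X : Space) :
  T0 X -> well_filtered X -> PS_first_countable X ->
  forall W : KX X -> Prop, uv_open W <-> scott_open W.
Proof.
  intros _ Hwf Hfc W; split; [apply uv_scott; auto| apply scott_uv; auto].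
Qed.
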